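(* Let $E_1,H_1,\dots,E_n,H_n$ be logically independent events, let $\mathcal F_k=\{E_1|H_1,\dots,E_k|H_k\}$, and let $(p_1,\dots,p_n)\in[0,1]^n$ be an assessment on $\mathcal F_n$. For each $k=2,\dots,n$, the set of coherent extensions $z$ of $(p_1,\dots,p_k)$ on $\mathcal F_k$ to the quasi conjunction $\mathcal C(\mathcal F_k)$ is the interval $[l_k,u_k]$ with $$l_k=T_L(p_1,\dots,p_k)=\max\Big(\sum_{i=1}^k p_i-(k-1),0\Big),$$ $$u_k=S_0^H(p_1,\dots,p_k)=\begin{cases}1,& p_i=1\text{ for some } i,\\[2pt] \dfrac{\sum_{i=1}^k\frac{p_i}{1-p_i}}{\sum_{i=1}^k\frac{p_i}{1-p_i}+1},& p_i<1\text{ for all } i.\end{cases}$$ *)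

(* Defs.v *)
From HB Require Import structures.
From mathcomp Require Import all_boot all_order all_algebra.
Set Implicit Arguments. Unset Strict Implicit. Unset Printing Implicit Defensive.
Import Order.TTheory GRing.Theory Num.Theory.
Local Open Scope ring_scope.

Definition ind (R : numDomainType) (b : bool) : R := (b : nat)%:R.

(* A family of m conditional events A j | B j on a finite space of
   constituents Omega, with assessment p j. *)
Definition coherent (R : realFieldType) (Omega : finType) (m : nat)
  (A B : 'I_m -> pred Omega) (p : 'I_m -> R) : Prop :=
  forall (J : {set 'I_m}) (s : 'I_m -> R), J != set0 ->
    exists w : Omega, [exists j in J, B j w] /\
      0 <= \sum_(j in J) s j * ind R (B j w) * (ind R (A j w) - p j).

Definition logically_independent (Omega : finType) (n : nat)
  (E H : nat -> pred Omega) : Prop :=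
  forall a b : 'I_n -> bool, exists w : Omega,
    forall i : 'I_n, E i w = a i /\ H i w = b i.

(* Quasi conjunction C(F_k) = (/\_{i<k} (E_i \/ ~H_i)) | (\/_{i<k} H_i). *)
Definition qc_cond (Omega : finType) (k : nat) (E H : nat -> pred Omega)
  : pred Omega := fun w => [forall i : 'I_k, E i w || ~~ H i w].
Definition qc_given (Omega : finType) (k : nat) (H : nat -> pred Omega)
  : pred Omega := fun w => [exists i : 'I_k, H i w].

(* The family F_k together with C(F_k), indexed by 'I_k.+1
   (index k is the quasi conjunction); assessment (p_0..p_{k-1}, z). *)
Definition extA (Omega : finType) (k : nat) (E H : nat -> pred Omega)
  (j : 'I_k.+1) : pred Omega :=
  if (j < k)%N then E j else qc_cond k E H.
Definition extB (Omega : finType) (k : nat) (H : nat -> pred Omega)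
  (j : 'I_k.+1) : pred Omega :=
  if (j < k)%N then H j else qc_given k H.
Definition extp (R : realFieldType) (k : nat) (p : nat -> R) (z : R)
  (j : 'I_k.+1) : R := if (j < k)%N then p j else z.

Definition TL (R : realFieldType) (k : nat) (p : nat -> R) : R :=
  Num.max (\sum_(i < k) p i - (k - 1)%:R) 0.

Definition SH0 (R : realFieldType) (k : nat) (p : nat -> R) : R :=
  if [exists i : 'I_k, p i == 1] then 1
  else (\sum_(i < k) p i / (1 - p i)) / (\sum_(i < k) p i / (1 - p i) + 1).

Arguments extA {Omega} k E H j _.
Arguments extB {Omega} k H j _.
Arguments extp {R} k p z j.
Arguments TL {R} k p.
Arguments SH0 {R} k p.
Arguments coherent {R Omega m} A B p.
Arguments logically_independent {Omega} n E H.

(* Main.v *)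
Require Import Defs.
From HB Require Import structures.
From mathcomp Require Import all_boot all_order all_algebra.
From mathcomp Require Import ring lra.
From Stdlib Require Import Classical.
Import Order.TTheory GRing.Theory Num.Theory.
Local Open Scope ring_scope.
Set Implicit Arguments. Unset Strict Implicit.
Lemma indE (R : numDomainType) b : ind R b = if b then 1 else 0.
Proof. by case: b. Qed.

Definition prof (R : realFieldType) := (R * (nat -> bool) * (nat -> bool))%type.
Definition Cof k (h e : nat -> bool) := [forall i : 'I_k, e i || ~~ h i].
Definition Hof k (h : nat -> bool) := [exists i : 'I_k, h i].

Definition good (R : realFieldType) k (p : nat -> R) (z : R) (L : seq (prof R)) :=
 [/\ all (fun x : prof R => (0 <= x.1.1) && Hof k x.1.2) L,
     forall j, (j < k)%N -> \sum_(x <- L) x.1.1 * (ind R (x.1.2 j) * (ind R (x.2 j) - p j)) = 0,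
     \sum_(x <- L) x.1.1 * ind R (Cof k x.1.2 x.2) = z * \sum_(x <- L) x.1.1 &
     0 < \sum_(x <- L) x.1.1].

Definition scl (R : realFieldType) (c : R) (L : seq (prof R)) : seq (prof R) :=
  map (fun x => (c * x.1.1, x.1.2, x.2)) L.

Lemma sum_scl (R : realFieldType) (c : R) L (G : (nat -> bool) -> (nat -> bool) -> R) :
  \sum_(x <- scl c L) x.1.1 * G x.1.2 x.2 = c * \sum_(x <- L) x.1.1 * G x.1.2 x.2.
Proof. by rewrite big_map mulr_sumr; apply: eq_bigr => x _ /=; rewrite mulrA. Qed.

Lemma sum_scl1 (R : realFieldType) (c : R) L :
  \sum_(x <- scl c L) x.1.1 = c * \sum_(x <- L) x.1.1.
Proof. by rewrite big_map mulr_sumr. Qed.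

Lemma good_mix (R : realFieldType) k p (z1 z2 : R) L1 L2 t :
  good k p z1 L1 -> good k p z2 L2 -> 0 <= t <= 1 ->
  good k p (t * z1 + (1 - t) * z2)
    (scl (t / \sum_(x <- L1) x.1.1) L1 ++ scl ((1 - t) / \sum_(x <- L2) x.1.1) L2).
Proof.
move=> [a1 f1 c1 m1] [a2 f2 c2 m2] /andP[t0 t1].
set M1 := \sum_(x <- L1) x.1.1 in c1 m1 *.
set M2 := \sum_(x <- L2) x.1.1 in c2 m2 *.
split.
- rewrite all_cat !all_map; apply/andP; split.
    apply: sub_all a1 => x /andP[w0 hh] /=; rewrite hh andbT.
    by apply: mulr_ge0 => //; apply: divr_ge0 => //; apply: ltW.
  apply: sub_all a2 => x /andP[w0 hh] /=; rewrite hh andbT.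
  by apply: mulr_ge0 => //; apply: divr_ge0; [lra | apply: ltW].
- move=> j hj; rewrite big_cat /=.
  rewrite (sum_scl _ _ (fun h e => ind R (h j) * (ind R (e j) - p j))).
  rewrite (sum_scl _ _ (fun h e => ind R (h j) * (ind R (e j) - p j))).
  by rewrite f1 // f2 // !mulr0 addr0.
- rewrite !big_cat /= (sum_scl _ _ (fun h e => ind R (Cof k h e))).
  rewrite (sum_scl _ _ (fun h e => ind R (Cof k h e))) !sum_scl1 c1 c2.
  have n1 : M1 != 0 by rewrite gt_eqF.
  have n2 : M2 != 0 by rewrite gt_eqF.
  rewrite -/M1 -/M2; clearbody M1 M2; field; by rewrite n1 n2.
- rewrite big_cat /= !sum_scl1 !mulfVK ?gt_eqF //; lra.
Qed.

Definition gainP (R : realFieldType) k (p : nat -> R) (z : R) (J : {set 'I_k.+1})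
  (s : 'I_k.+1 -> R) (h e : nat -> bool) : R :=
  \sum_(j in J) s j * ind R (if (j < k)%N then h j else Hof k h) *
     (ind R (if (j < k)%N then e j else Cof k h e) - (if (j < k)%N then p j else z)).

Lemma sum_all_eq (R : realFieldType) (T : Type) (a : pred T) (F G : T -> R) L :
  all a L -> (forall x, a x -> F x = G x) -> \sum_(x <- L) F x = \sum_(x <- L) G x.
Proof.
move=> + FG; elim: L => [|x L IH]; first by rewrite !big_nil.
by move=> /= /andP[ax aL]; rewrite !big_cons FG // IH.
Qed.

Lemma sum_neg (R : realFieldType) (T : Type) (w g : T -> R) L :
  all (fun x => (0 <= w x) && (g x < 0)) L -> 0 < \sum_(x <- L) w x ->
  \sum_(x <- L) w x * g x < 0.
Proof.
elim: L => [|x L IH]; first by rewrite big_nil ltxx.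
move=> /= /andP[/andP[w0 g0] aL]; rewrite !big_cons => hm.
have sL0 : 0 <= \sum_(y <- L) w y.
  elim: L aL {IH hm} => [|y L IHL]; first by rewrite big_nil.
  by move=> /= /andP[/andP[? _] ?]; rewrite big_cons addr_ge0 // IHL.
have sL1 : \sum_(y <- L) w y * g y <= 0.
  elim: L aL {IH hm sL0} => [|y L IHL]; first by rewrite big_nil.
  move=> /= /andP[/andP[? ?] ?]; rewrite big_cons.
  have := IHL ltac:(assumption); nra.
have [e0|pos] := eqVneq (\sum_(y <- L) w y) 0.
  rewrite e0 addr0 in hm; nra.
have := IH aL ltac:(rewrite lt_def pos sL0 //); nra.
Qed.

Lemma good_gain (R : realFieldType) k p (z : R) L (J : {set 'I_k.+1}) s :
  good k p z L -> ord_max \in J ->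
  exists h e, Hof k h /\ 0 <= gainP p z J s h e.
Proof.
move=> [a f c m] hJ; apply: NNPP => hno.
have neg : forall h e, Hof k h -> gainP p z J s h e < 0.
  move=> h e hh; rewrite ltNge; apply/negP => ge.
  by apply: hno; exists h, e.
have : \sum_(x <- L) x.1.1 * gainP p z J s x.1.2 x.2 < 0.
  apply: sum_neg => //; apply: sub_all a => x /andP[-> hh] /=.
  by apply: neg.
suff -> : \sum_(x <- L) x.1.1 * gainP p z J s x.1.2 x.2 = 0 by rewrite ltxx.
rewrite /gainP.
under eq_bigr do rewrite mulr_sumr.
rewrite exchange_big /=; apply: big1 => j _.
under eq_bigr do rewrite -!mulrA mulrCA.
rewrite -mulr_sumr.
case: ifP => hjk.
  by rewrite (f _ hjk) mulr0.
rewrite (@sum_all_eq _ _ _ _ (fun x => x.1.1 * ind R (Cof k x.1.2 x.2) - z * x.1.1) _ a).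
  by rewrite sumrB -mulr_sumr c subrr mulr0.
by move=> x /andP[_ ->] /=; rewrite indE /= mul1r mulrBr (mulrC z).
Qed.

Lemma realize (Omega : finType) n (E H : nat -> pred Omega) k (h e : nat -> bool) :
  logically_independent n E H -> (k <= n)%N ->
  exists w : Omega, forall j : 'I_k.+1,
    extA k E H j w = (if (j < k)%N then e j else Cof k h e) /\
    extB k H j w = (if (j < k)%N then h j else Hof k h).
Proof.
move=> LI kn; have [w hw] := LI (fun i => e i) (fun i => h i).
have hw' : forall i, (i < k)%N -> E i w = e i /\ H i w = h i.
  by move=> i ik; exact: (hw (Ordinal (leq_trans ik kn))).
exists w => j; rewrite /extA /extB; case: ifP => jk.
  exact: hw'.
split.
  rewrite /qc_cond /Cof; apply: eq_forallb => i.
  by have [-> ->] := hw' i (ltn_ord i).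
rewrite /qc_given /Hof; apply: eq_existsb => i.
by have [_ ->] := hw' i (ltn_ord i).
Qed.

Lemma gain_eq (R : realFieldType) (Omega : finType) (E H : nat -> pred Omega) k
  (p : nat -> R) (z : R) (J : {set 'I_k.+1}) (s : 'I_k.+1 -> R) (w : Omega) (h e : nat -> bool) :
  (forall j : 'I_k.+1,
    extA k E H j w = (if (j < k)%N then e j else Cof k h e) /\
    extB k H j w = (if (j < k)%N then h j else Hof k h)) ->
  \sum_(j in J) s j * ind R (extB k H j w) * (ind R (extA k E H j w) - extp k p z j)
    = gainP p z J s h e /\
  [exists j in J, extB k H j w] = [exists j in J, if (j < k)%N then h j else Hof k h].
Proof.
move=> hw; split.
  apply: eq_bigr => j _; have [-> ->] := hw j.
  by rewrite /extp; case: ifP.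
by apply: eq_existsb => j; have [_ ->] := hw j.
Qed.

Lemma sum_ind (R : realFieldType) k j (F : nat -> R) : (j < k)%N ->
  \sum_(i < k) ind R (nat_of_ord i == j) * F i = F j.
Proof.
move=> hj; rewrite (bigD1 (Ordinal hj)) //= eqxx indE mul1r big1 ?addr0 //.
move=> i ne; have -> : (nat_of_ord i == j) = false.
  by apply/negbTE; apply: contra ne => /eqP eij; apply/eqP/val_inj.
by rewrite indE mul0r.
Qed.

Lemma Hof_true k : (0 < k)%N -> Hof k (fun _ => true).
Proof. by move=> k0; apply/existsP; exists (Ordinal k0). Qed.
Lemma Hof_eq k j : (j < k)%N -> Hof k (fun l => l == j).
Proof. by move=> hj; apply/existsP; exists (Ordinal hj) => /=. Qed.

Lemma goodU1 (R : realFieldType) k (p : nat -> R) i0 : (i0 < k)%N -> p i0 = 1 ->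
  good k p 1 [:: (1, fun l => l == i0, fun l => l == i0)].
Proof.
move=> hi p1; split.
- by rewrite /= ler01 Hof_eq.
- move=> j hj; rewrite big_cons big_nil addr0 /=.
  by case: eqP => [->|_] /=; rewrite !indE ?p1 ?subrr ?mulr0 ?mul0r ?mul1r.
- rewrite !big_cons !big_nil /= !addr0.
  have -> : Cof k (fun l => l == i0) (fun l => l == i0) = true.
    by apply/forallP => l /=; case: (_ == _).
  by rewrite indE.
- by rewrite big_cons big_nil addr0 ltr01.
Qed.

Lemma goodU2 (R : realFieldType) k (p : nat -> R) : (0 < k)%N ->
  (forall i, (i < k)%N -> 0 <= p i < 1) ->
  let S := \sum_(i < k) p i / (1 - p i) in
  good k p (S / (S + 1))
   ((1, fun _ => true, fun _ => false) ::
     [seq (p i / (1 - p i), fun l => l == nat_of_ord i, fun l => l == nat_of_ord i)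
     | i : 'I_k <- index_enum 'I_k]).
Proof.
move=> k0 hp S.
have hS : 0 <= S.
  apply: sumr_ge0 => i _; have /andP[a b] := hp i (ltn_ord i).
  by apply: divr_ge0 => //; lra.
split.
- rewrite /= ler01 Hof_true //= all_map; apply/allP => i _ /=.
  have /andP[a b] := hp i (ltn_ord i).
  rewrite Hof_eq // andbT; apply: divr_ge0 => //; lra.
- move=> j hj; rewrite big_cons big_map /= !indE mul1r.
  rewrite (eq_bigr (fun i : 'I_k => ind R (nat_of_ord i == j) * (p i / (1 - p i) * (1 - p j)))).
    rewrite (sum_ind (fun i => p i / (1 - p i) * (1 - p j))) //.
    have /andP[a b] := hp j hj.
    have ne : 1 - p j != 0 by rewrite subr_eq0 eq_sym lt_eqF.
    rewrite mulfVK //; lra.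
  move=> i _; rewrite eq_sym; case: eqP => [->|]; rewrite !indE; lra.
- rewrite !big_cons !big_map /=.
  have -> : Cof k (fun _ => true) (fun _ => false) = false.
    by apply/negbTE; rewrite negb_forall; apply/existsP; exists (Ordinal k0).
  rewrite (eq_bigr (fun i : 'I_k => p i / (1 - p i))); last first.
    move=> i _; have -> : Cof k (fun l => l == nat_of_ord i) (fun l => l == nat_of_ord i) = true.
      by apply/forallP => l /=; case: (_ == _).
    by rewrite indE mulr1.
  rewrite -/S indE mulr0 add0r.
  have ne : S + 1 != 0 by rewrite gt_eqF //; lra.
  by rewrite mulrC; field.
- rewrite big_cons big_map /=; apply: (lt_le_trans ltr01); rewrite lerDl; exact: hS.
Qed.

Lemma goodL0 (R : realFieldType) k (p : nat -> R) j0 : (j0 < k)%N -> p j0 = 0 ->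
  good k p 0 [:: (1, fun l => l == j0, fun _ => false)].
Proof.
move=> hj p0; split.
- by rewrite /= ler01 Hof_eq.
- move=> j hj'; rewrite big_cons big_nil addr0 /=.
  by case: eqP => [->|_] /=; rewrite !indE ?p0 ?subrr ?mulr0 ?mul0r ?mul1r.
- rewrite !big_cons !big_nil /= !addr0.
  have -> : Cof k (fun l => l == j0) (fun _ => false) = false.
    by apply/negbTE; rewrite negb_forall; apply/existsP; exists (Ordinal hj) => /=; rewrite eqxx.
  by rewrite indE mulr0 mul0r.
- by rewrite big_cons big_nil addr0 ltr01.
Qed.

Lemma goodL (R : realFieldType) k (p : nat -> R) : (0 < k)%N ->
  (forall i, (i < k)%N -> 0 < p i <= 1) ->
  let Q := \sum_(i < k) (1 - p i) in
  let a := Num.max (1 - Q) 0 in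
  let b := Num.max (Q - 1) 0 in
  good k p a
   ((a, fun _ => true, fun _ => true) ::
     ([seq (1 - p i, fun _ => true, fun l => l != nat_of_ord i)
     | i : 'I_k <- index_enum 'I_k] ++
      [seq ((1 - p i) * b / p i, fun l => l == nat_of_ord i, fun _ => false)
     | i : 'I_k <- index_enum 'I_k])).
Proof.
move=> k0 hp Q a b.
have a0 : 0 <= a by rewrite le_max lexx orbT.
have b0 : 0 <= b by rewrite le_max lexx orbT.
have ab : a - b = 1 - Q.
  rewrite /a /b; case: (leP (1 - Q) 0) => h1.
    rewrite (max_idPl _); lra.
  rewrite (max_idPr _); lra.
have Q0 : 0 <= Q by apply: sumr_ge0 => i _; have := hp i (ltn_ord i); lra.
split.
- rewrite /= a0 Hof_true //= all_cat !all_map; apply/andP; split; apply/allP => i _ /=.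
    by rewrite Hof_true // andbT; have := hp i (ltn_ord i); lra.
  rewrite Hof_eq // andbT; have /andP[u v] := hp i (ltn_ord i).
  by apply: divr_ge0; [apply: mulr_ge0 => //; lra | apply: ltW].
- move=> j hj; rewrite big_cons big_cat !big_map /= !indE mul1r.
  rewrite (eq_bigr (fun i : 'I_k => (1 - p i) * (1 - p j) - ind R (nat_of_ord i == j) * (1 - p i))); last first.
    by move=> i _; rewrite eq_sym; case: eqP => [->|_]; rewrite !indE /=; ring.
  rewrite [X in _ + (_ + X)](eq_bigr (fun i : 'I_k => ind R (nat_of_ord i == j) * ((1 - p i) * b / p i * (0 - p i)))); last first.
    by move=> i _; rewrite eq_sym; case: eqP => [->|_]; rewrite !indE /=; ring.
  rewrite sumrB -mulr_suml -/Q (sum_ind (fun i => 1 - p i)) //.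
  rewrite (sum_ind (fun i => (1 - p i) * b / p i * (0 - p i))) //.
  have /andP[u v] := hp j hj.
  have ne : p j != 0 by rewrite gt_eqF.
  rewrite sub0r mulrN mulfVK //.
  have -> : a * (1 - p j) = (1 - Q + b) * (1 - p j) by rewrite -ab subrK.
  by ring.
- rewrite !big_cons !big_cat !big_map /=.
  have -> : Cof k (fun _ => true) (fun _ => true) = true by apply/forallP.
  rewrite big1; last first.
    move=> i _; have -> : Cof k (fun _ => true) (fun l => l != nat_of_ord i) = false.
      by apply/negbTE; rewrite negb_forall; apply/existsP; exists i => /=; rewrite eqxx.
    by rewrite indE mulr0.
  rewrite big1; last first.
    move=> i _; have -> : Cof k (fun l => l == nat_of_ord i) (fun _ => false) = false.
      by apply/negbTE; rewrite negb_forall; apply/existsP; exists i => /=; rewrite eqxx.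
    by rewrite indE mulr0.
  rewrite indE mulr1 !addr0.
  have [Q1|Q1] := leP Q 1.
    have -> : b = 0 by rewrite /b (max_idPr _) //; lra.
    rewrite [X in _ + (_ + X)]big1 ?addr0 -/Q; last by move=> i _; rewrite mulr0 mul0r.
    have -> : a = 1 - Q by rewrite /a (max_idPl _) //; lra.
    by ring.
  have -> : a = 0 by rewrite /a (max_idPr _) //; lra.
  by rewrite !mul0r.
- rewrite big_cons big_cat !big_map /=.
  have s2 : 0 <= \sum_(i < k) (1 - p i) * b / p i.
    apply: sumr_ge0 => i _; have /andP[u v] := hp i (ltn_ord i).
    by apply: divr_ge0; [apply: mulr_ge0 => //; lra | apply: ltW].
  have : 1 - Q <= a by rewrite le_max lexx.
  rewrite -/Q; lra.
Qed.

Lemma gainT (R : realFieldType) k (p : nat -> R) (z : R) (s : 'I_k.+1 -> R) (h e : nat -> bool) :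
  gainP p z [set: 'I_k.+1] s h e =
  \sum_(i < k) s (widen_ord (leqnSn k) i) * ind R (h i) * (ind R (e i) - p i) +
  s ord_max * ind R (Hof k h) * (ind R (Cof k h e) - z).
Proof.
rewrite /gainP (eq_bigl xpredT) => [|j]; last by rewrite in_setT.
rewrite big_ord_recr /= ltnn; congr (_ + _).
by apply: eq_bigr => i _; rewrite ltn_ord.
Qed.

Lemma gain1 (R : realFieldType) k (p : nat -> R) (z : R) (s : 'I_k.+1 -> R) (h e : nat -> bool) :
  gainP p z [set ord_max] s h e =
  s ord_max * ind R (Hof k h) * (ind R (Cof k h e) - z).
Proof. by rewrite /gainP big_set1 /= ltnn. Qed.

Lemma Bex_Hof k (J : {set 'I_k.+1}) (h : nat -> bool) :
  [exists j in J, if (j < k)%N then h j else Hof k h] -> Hof k h.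
Proof.
move=> /existsP[j /andP[_]]; case: ifP => // jk hj.
by apply/existsP; exists (Ordinal jk).
Qed.

Lemma coh_ex (R : realFieldType) (Omega : finType) (E H : nat -> pred Omega) k
  (p : nat -> R) (z : R) :
  coherent (extA k E H) (extB k H) (extp k p z) ->
  forall (J : {set 'I_k.+1}) s, J != set0 ->
  exists h e, Hof k h /\ 0 <= gainP p z J s h e.
Proof.
move=> coh J s J0; have [w [hB hG]] := coh J s J0.
have hw : forall j : 'I_k.+1,
    extA k E H j w = (if (j < k)%N then (fun i => E i w) j else Cof k (fun i => H i w) (fun i => E i w)) /\
    extB k H j w = (if (j < k)%N then (fun i => H i w) j else Hof k (fun i => H i w)).
  by move=> j; rewrite /extA /extB; case: ifP.
have [g1 g2] := gain_eq p z J s hw.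
exists (fun i => H i w), (fun i => E i w); split.
  by apply: (Bex_Hof (J := J)); rewrite -g2.
by rewrite -g1.
Qed.

Lemma bnd3 (R : realFieldType) k (p : nat -> R) (h e : nat -> bool) :
  (forall i, (i < k)%N -> 0 <= p i <= 1) ->
  \sum_(i < k) ind R (h i) * (ind R (e i) - p i) - ind R (Cof k h e) <=
  \sum_(i < k) (1 - p i) - 1.
Proof.
move=> hp.
have tb : forall i : 'I_k, ind R (h i) * (ind R (e i) - p i) <= 1 - p i.
  move=> i; have := hp i (ltn_ord i).
  by case: (h i); case: (e i); rewrite !indE; lra.
case: (boolP (Cof k h e)) => C.
  rewrite indE; apply: lerB => //; exact: ler_sum => i _.
rewrite /Cof negb_forall in C; have /existsP[i0] := C.
rewrite negb_or negbK => /andP[ne hi].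
rewrite (bigD1 i0) //= [X in _ <= X - 1](bigD1 i0) //= indE /= subr0.
rewrite (negbTE ne) hi !indE /=.
have : \sum_(i < k | i != i0) ind R (h i) * (ind R (e i) - p i) <=
       \sum_(i < k | i != i0) (1 - p i) by apply: ler_sum => i _.
move=> hle; lra.
Qed.

Lemma sum1 (R : realFieldType) k (p : nat -> R) :
  \sum_(i < k) (1 - p i) = k%:R - \sum_(i < k) p i.
Proof. by rewrite sumrB sumr_const card_ord. Qed.

Lemma F12 (R : realFieldType) (Omega : finType) (E H : nat -> pred Omega) k
  (p : nat -> R) (z : R) :
  coherent (extA k E H) (extB k H) (extp k p z) -> 0 <= z <= 1.
Proof.
move=> coh.
have J0 : [set (@ord_max k)] != set0 by apply/set0Pn; exists ord_max; rewrite in_set1.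
have [h1 [e1 [H1 g1]]] := coh_ex coh (fun _ => -1) J0.
have [h2 [e2 [H2 g2]]] := coh_ex coh (fun _ => 1) J0.
rewrite gain1 H1 in g1; rewrite gain1 H2 in g2.
move: g1 g2; rewrite !indE.
by case: (Cof k h1 e1); case: (Cof k h2 e2); move=> *; apply/andP; split; lra.
Qed.

Lemma F3 (R : realFieldType) (Omega : finType) (E H : nat -> pred Omega) k
  (p : nat -> R) (z : R) : (0 < k)%N ->
  (forall i, (i < k)%N -> 0 <= p i <= 1) ->
  coherent (extA k E H) (extB k H) (extp k p z) -> TL k p <= z.
Proof.
move=> k0 hp coh.
have /andP[z0 _] := F12 coh.
have J0 : [set: 'I_k.+1] != set0 by apply/set0Pn; exists ord_max; rewrite in_setT.
have [h [e [Hh g]]] := coh_ex coh (fun j : 'I_k.+1 => if (j < k)%N then 1 else -1) J0.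
rewrite gainT /= ltnn Hh in g.
have := bnd3 h e hp.
rewrite (eq_bigr (fun i : 'I_k => ind R (h i) * (ind R (e i) - p i))) in g; last first.
  by move=> i _; rewrite ltn_ord mul1r.
rewrite sum1 /TL ge_max z0 andbT natrB // => b.
rewrite indE in g; lra.
Qed.

Lemma tb_eq (R : realFieldType) (t pi : R) :
  pi < 1 -> - t / (1 - pi) * ind R true * (ind R true - pi) = - t.
Proof.
move=> p1; have ne : 1 - pi != 0 by rewrite subr_eq0 eq_sym lt_eqF.
by rewrite !indE mulr1 mulfVK.
Qed.

Lemma tb_gen (R : realFieldType) (t pi : R) (hi ei : bool) :
  0 <= t -> 0 <= pi < 1 ->
  - t / (1 - pi) * ind R hi * (ind R ei - pi) <= t * (pi / (1 - pi)).
Proof.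
move=> t0 /andP[p0 p1].
have R0 : 0 <= t * (pi / (1 - pi)) by apply: mulr_ge0 => //; apply: divr_ge0 => //; lra.
case: hi; last by rewrite !indE mulr0 mul0r.
case: ei; first by rewrite tb_eq //; lra.
rewrite !indE mulr1 sub0r; rewrite le_eqVlt; apply/orP; left; apply/eqP; ring.
Qed.

Lemma tb_C (R : realFieldType) (t pi : R) (hi ei : bool) :
  0 <= t -> 0 <= pi < 1 -> ei || ~~ hi ->
  - t / (1 - pi) * ind R hi * (ind R ei - pi) <= 0.
Proof.
move=> t0 /andP[p0 p1].
case: hi; last by rewrite !indE mulr0 mul0r.
by case: ei => // _; rewrite tb_eq //; lra.
Qed.

Lemma F4 (R : realFieldType) (Omega : finType) (E H : nat -> pred Omega) k
  (p : nat -> R) (z : R) : (0 < k)%N ->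
  (forall i, (i < k)%N -> 0 <= p i <= 1) ->
  coherent (extA k E H) (extB k H) (extp k p z) -> z <= SH0 k p.
Proof.
move=> k0 hp coh.
have /andP[z0 z1] := F12 coh.
rewrite /SH0; case: ifP => [//|/negbT nex].
have hp1 : forall i, (i < k)%N -> 0 <= p i < 1.
  move=> i ik; have /andP[a b] := hp i ik; rewrite a /= lt_def b andbT.
  apply: contra nex => /eqP e1; apply/existsP; exists (Ordinal ik); exact/eqP.
set S := \sum_(i < k) p i / (1 - p i).
have hS : 0 <= S.
  apply: sumr_ge0 => i _; have /andP[a b] := hp1 i (ltn_ord i).
  by apply: divr_ge0 => //; lra.
rewrite leNgt; apply/negP => hz.
have S1 : 0 < S + 1 by lra.
rewrite ltr_pdivrMr // in hz.
set g := z - (1 - z) * S.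
have g0 : 0 < g by rewrite /g; lra.
set r := S / (S + 1).
have r0 : 0 <= r by apply: divr_ge0; lra.
have r1 : r < 1 by rewrite /r ltr_pdivrMr //; lra.
have Sr : S = r * (S + 1) by rewrite /r mulfVK // gt_eqF.
set t := 1 - z + g / (S + 1).
have gS : 0 < g / (S + 1) by apply: divr_gt0.
have t0 : 0 < t by rewrite /t; lra.
have tS : t * S < z.
  have -> : t * S = (1 - z) * S + g * r.
    by rewrite /t /r; field; rewrite gt_eqF.
  have : g * r < g by nra.
  rewrite /g; lra.
have J0 : [set: 'I_k.+1] != set0 by apply/set0Pn; exists ord_max; rewrite in_setT.
have [h [e [Hh g1]]] := coh_ex coh
  (fun j : 'I_k.+1 => if (j < k)%N then - t / (1 - p j) else 1) J0.
rewrite gainT /= ltnn Hh mul1r indE mul1r in g1.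
rewrite (eq_bigr (fun i : 'I_k => - t / (1 - p i) * ind R (h i) * (ind R (e i) - p i))) in g1;
  last by move=> i _; rewrite ltn_ord.
case: (boolP (Cof k h e)) => C.
  have /existsP[i0 hi0] := Hh.
  have ei0 : e i0 by move: C => /forallP /(_ i0); rewrite hi0 orbF.
  rewrite (bigD1 i0) //= hi0 ei0 tb_eq in g1; last by have /andP[] := hp1 i0 (ltn_ord i0).
  have : \sum_(i < k | i != i0) - t / (1 - p i) * ind R (h i) * (ind R (e i) - p i) <= 0.
    apply: sumr_le0 => i _; apply: tb_C; [lra | exact: hp1 | ].
    by move: C => /forallP /(_ i).
  have ht : 1 - z < t by rewrite /t; lra.
  rewrite indE C in g1; move=> hle; lra.
have : \sum_(i < k) - t / (1 - p i) * ind R (h i) * (ind R (e i) - p i) <= t * S.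
  rewrite /S mulr_sumr; apply: ler_sum => i _; apply: tb_gen; [lra | exact: hp1].
rewrite indE (negbTE C) in g1; move=> hle; lra.
Qed.

Lemma goodTL (R : realFieldType) k (p : nat -> R) : (0 < k)%N ->
  (forall i, (i < k)%N -> 0 <= p i <= 1) -> exists L, good k p (TL k p) L.
Proof.
move=> k0 hp.
case: (boolP [exists i : 'I_k, p i == 0]) => [/existsP[j0 /eqP pj0]|nex].
  have -> : TL k p = 0.
    rewrite /TL; apply/(max_idPr _).
    have : \sum_(i < k) p i <= \sum_(i < k) (1 - ind R (nat_of_ord i == j0)).
      apply: ler_sum => i _; have := hp i (ltn_ord i).
      rewrite indE; case: eqP => [e|_]; last by lra.
      by rewrite e pj0 subrr lexx.
    rewrite sumrB sumr_const card_ord.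
    rewrite [X in _ <= _ - X -> _](eq_bigr (fun i : 'I_k => ind R (nat_of_ord i == j0) * 1)); last by move=> i _; rewrite mulr1.
    rewrite (sum_ind (fun _ => 1)) // natrB //; lra.
  by exists [:: (1, fun l => l == nat_of_ord j0, fun _ => false)]; apply: goodL0.
have hp' : forall i, (i < k)%N -> 0 < p i <= 1.
  move=> i ik; have /andP[a b] := hp i ik; rewrite b andbT lt_def a andbT.
  apply: contra nex => /eqP e0; apply/existsP; exists (Ordinal ik); exact/eqP.
have eTL : Num.max (1 - \sum_(i < k) (1 - p i)) 0 = TL k p.
  by rewrite /TL sum1 natrB //; congr Num.max; ring.
move: (goodL k0 hp'); cbv zeta; rewrite eTL.
by move=> G; eexists; exact: G.
Qed.

Lemma goodSH (R : realFieldType) k (p : nat -> R) : (0 < k)%N ->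
  (forall i, (i < k)%N -> 0 <= p i <= 1) -> exists L, good k p (SH0 k p) L.
Proof.
move=> k0 hp; rewrite /SH0; case: ifP => [/existsP[i0 /eqP pi0]|/negbT nex].
  by eexists; apply: (goodU1 (ltn_ord i0) pi0).
have hp1 : forall i, (i < k)%N -> 0 <= p i < 1.
  move=> i ik; have /andP[a b] := hp i ik; rewrite a /= lt_def b andbT.
  apply: contra nex => /eqP e1; apply/existsP; exists (Ordinal ik); exact/eqP.
by eexists; apply: (goodU2 k0 hp1).
Qed.

Lemma good_z (R : realFieldType) k (p : nat -> R) z : (0 < k)%N ->
  (forall i, (i < k)%N -> 0 <= p i <= 1) -> TL k p <= z <= SH0 k p ->
  exists L, good k p z L.
Proof.
move=> k0 hp /andP[lz zu].
have [Ll gl] := goodTL k0 hp; have [Lu gu] := goodSH k0 hp.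
have [eq|ne] := eqVneq (TL k p) (SH0 k p).
  have -> : z = TL k p by apply/eqP; rewrite eq_le lz eq zu.
  by exists Ll.
set l := TL k p in lz gl ne *; set u := SH0 k p in zu gu ne *.
have lu : l < u by rewrite lt_def eq_sym ne (le_trans lz zu).
set t := (u - z) / (u - l).
have ul : u - l != 0 by rewrite subr_eq0 eq_sym.
have t01 : 0 <= t <= 1.
  apply/andP; split; first by apply: divr_ge0; lra.
  by rewrite /t ler_pdivrMr; lra.
have := good_mix gl gu t01.
have -> : t * l + (1 - t) * u = z by rewrite /t; field.
by move=> G; eexists; exact: G.
Qed.

Theorem theorem5 (R : realFieldType) (Omega : finType) (n : nat)
  (E H : nat -> pred Omega) (p : nat -> R) :
  logically_independent n E H ->
  (forall i, (i < n)%N -> 0 <= p i <= 1) ->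
  forall k, (2 <= k <= n)%N ->
  forall z : R,
    coherent (extA k E H) (extB k H) (extp k p z) <->
    TL k p <= z <= SH0 k p.
Proof.
move=> LI hpn k /andP[k2 kn] z.
have k0 : (0 < k)%N by apply: leq_trans k2.
have hp : forall i, (i < k)%N -> 0 <= p i <= 1.
  by move=> i ik; apply: hpn; apply: leq_trans kn.
split.
  by move=> coh; rewrite (F3 k0 hp coh) (F4 k0 hp coh).
move=> hz J s J0.
case: (boolP (ord_max \in J)) => hJ.
  have [L gL] := good_z k0 hp hz.
  have [h [e [Hh g]]] := good_gain s gL hJ.
  have [w hw] := realize h e LI kn.
  have [g1 g2] := gain_eq p z J s hw.
  exists w; rewrite g1 g2; split => //.
  by apply/existsP; exists ord_max; rewrite hJ /= ltnn.
have /set0Pn[j0 jJ] := J0.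
have j0k : (j0 < k)%N.
  have := ltn_ord j0; rewrite ltnS leq_eqVlt => /orP[/eqP e0|//].
  have ej : j0 = ord_max by apply: val_inj.
  by move: hJ; rewrite -ej jJ.
have inJ : forall j, j \in J -> (j < k)%N.
  move=> j jJ'; have := ltn_ord j; rewrite ltnS leq_eqVlt => /orP[/eqP e0|//].
  have ej : j = ord_max by apply: val_inj.
  by move: hJ; rewrite -ej jJ'.
set h := fun l : nat => l == nat_of_ord j0.
set e := if 0 <= s j0 then (fun l : nat => l == nat_of_ord j0) else (fun _ : nat => false).
have [w hw] := realize h e LI kn.
have [g1 g2] := gain_eq p z J s hw.
exists w; rewrite g1 g2; split.
  by apply/existsP; exists j0; rewrite jJ j0k /h eqxx.
rewrite /gainP (bigD1 j0) //= j0k big1 ?addr0.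
  rewrite /h /e eqxx indE mulr1; have /andP[a b] := hp j0 j0k.
  case: ifP => s0; rewrite indE ?eqxx /=.
    by apply: mulr_ge0 => //; lra.
  have : s j0 < 0 by rewrite ltNge s0.
  nra.
move=> j /andP[jJ' ne]; rewrite (inJ j jJ') /h.
have -> : (nat_of_ord j == nat_of_ord j0) = false.
  by apply/negbTE; apply: contra ne => /eqP eij; apply/eqP/val_inj.
by rewrite indE mulr0 mul0r.
Qed.
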